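(* Let $G_1$ and $G_2$ be two vertex-disjoint simple connected graphs with $|V(G_1)|=n_1$, $|V(G_2)|=n_2$, $|E(G_1)|=m_1$, $|E(G_2)|=m_2$. Then the edge T-join $G_1\underline{\vee}_T G_2$ satisfies \[ F(G_1\underline{\vee}_T G_2)=8F(G_1)+F(G_2)+3n_2^{2}M_1(G_1)+3m_1M_1(G_2)+M_4(G_1)+3n_2\,HM(G_1)+3\,ReZM(G_1)+m_1^{2}(6m_2+m_1n_2)+m_1n_2^{3}. \]
   Context: For a simple graph $G$ and $v\in V(G)$, $d_G(v)$ is the degree of $v$. Define $M_1(G)=\sum_{v\in V(G)}d_G(v)^2$, $F(G)=\sum_{v\in V(G)}d_G(v)^3$, $M_4(G)=\sum_{v\in V(G)}d_G(v)^4$, $HM(G)=\sum_{uv\in E(G)}[d_G(u)+d_G(v)]^2$, and $ReZM(G)=\sum_{uv\in E(G)}d_G(u)d_G(v)\,[d_G(u)+d_G(v)]$. The total graph $T(G)$ is obtained from $G$ (keeping all edges of $G$) by inserting a new vertex for each edge of $G$, joining each new vertex to the two end vertices of its edge, and joining by an edge each pair of new vertices corresponding to adjacent edges of $G$ (edges sharing an end vertex); let $I(G)$ denote the set of these new vertices, so $V(T(G))=V(G)\cup I(G)$. The edge T-join $G_1\underline{\vee}_T G_2$ is the graph obtained from $T(G_1)$ and $G_2$ (taken vertex-disjoint) by joining each vertex of $I(G_1)$ to every vertex of $G_2$ by an edge. *)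

(* Defs.v *)
From mathcomp Require Import all_boot.
Set Implicit Arguments. Unset Strict Implicit. Unset Printing Implicit Defensive.

Record sgraph := SGraph {
  vert :> finType;
  adj : rel vert;
  adj_sym : symmetric adj;
  adj_irr : irreflexive adj }.

Definition connected (G : sgraph) : Prop := forall u v : G, connect (@adj G) u v.

Definition deg (G : sgraph) (v : G) : nat := #|[set w | adj v w]|.

Definition edges (G : sgraph) : {set {set G}} :=
  [set [set u; v] | u in G, v in G & adj u v].

Definition M1 (G : sgraph) : nat := \sum_(v : G) deg v ^ 2.
Definition Fidx (G : sgraph) : nat := \sum_(v : G) deg v ^ 3.
Definition M4 (G : sgraph) : nat := \sum_(v : G) deg v ^ 4.
Definition HM (G : sgraph) : nat :=
  \sum_(e in edges G) (\sum_(x in e) deg x) ^ 2.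
Definition ReZM (G : sgraph) : nat :=
  \sum_(e in edges G) (\prod_(x in e) deg x) * (\sum_(x in e) deg x).

(* the type of edges of G (used as the new vertices I(G) of T(G)) *)
Definition edge_t (G : sgraph) : finType := {e : {set G} | e \in edges G}.

(* vertex set of the edge T-join: (V(G1) + I(G1)) + V(G2) *)
Definition tjoin_vert (G1 G2 : sgraph) : finType := ((G1 + edge_t G1) + G2)%type.

Definition tjoin_adj (G1 G2 : sgraph) : rel (tjoin_vert G1 G2) :=
  fun x y =>
  match x, y with
  | inl (inl u), inl (inl v) => adj u v
  | inl (inl u), inl (inr e) => u \in val e
  | inl (inr e), inl (inl u) => u \in val e
  | inl (inr e), inl (inr f) => (e != f) && (val e :&: val f != set0) (* adjacent edges *)
  | inl (inr _), inr _ => true                                (* I(G1) joined to V(G2) *)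
  | inr _, inl (inr _) => true
  | inr w, inr w' => adj w w'
  | _, _ => false
  end.

Lemma tjoin_adj_sym G1 G2 : symmetric (@tjoin_adj G1 G2).
Proof.
move=> [[u|e]|w] [[v|f]|w'] //=; try exact: adj_sym.
by rewrite eq_sym setIC.
Qed.

Lemma tjoin_adj_irr G1 G2 : irreflexive (@tjoin_adj G1 G2).
Proof. by move=> [[u|e]|w] //=; rewrite ?adj_irr ?eqxx. Qed.

Definition edge_tjoin (G1 G2 : sgraph) : sgraph :=
  SGraph (@tjoin_adj_sym G1 G2) (@tjoin_adj_irr G1 G2).

(* Main.v *)
Require Import Defs.
From mathcomp Require Import all_boot.
Lemma sum_sig (T : finType) (P : pred T) (F : T -> nat) :
  \sum_(e : {x : T | P x}) F (val e) = \sum_(x | P x) F x.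
Proof.
rewrite -(big_imset F (in2W val_inj)) /=.
apply: eq_bigl => x; apply/imsetP/idP => [[e _ ->]|Px]; first exact: valP.
by exists (exist _ x Px).
Qed.

Lemma degE (G : sgraph) (v : G) : deg v = \sum_w (adj v w : nat).
Proof. by rewrite /deg cardsE -sum1_card big_mkcond. Qed.

Lemma edgeP (G : sgraph) (e : {set G}) :
  reflect (exists a b, [/\ adj a b, a != b & e = [set a; b]]) (e \in edges G).
Proof.
apply: (iffP imset2P).
  move=> [a b _]; rewrite inE => Hab ->; exists a, b; split=> //.
  by apply/negP=> /eqP E; move: Hab; rewrite E adj_irr.
case=> a [b [Hab _ E]].
by apply: (Imset2spec (x1:=a) (x2:=b) _ _ E); rewrite ?inE.
Qed.

Lemma card_edge {G : sgraph} {e : {set G}} : e \in edges G -> #|e| = 2.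
Proof. by case/edgeP=> a [b [_ nab ->]]; rewrite cards2 nab. Qed.

Lemma sum_edge (G : sgraph) (e : {set G}) : e \in edges G ->
  exists a b, forall f : G -> nat, \sum_(x in e) f x = f a + f b /\ \prod_(x in e) f x = f a * f b.
Proof.
case/edgeP=> a [b [Hab nab ->]]; exists a, b => f; split.
  by rewrite big_setU1 ?big_set1 // in_set1.
by rewrite big_setU1 ?big_set1 // in_set1.
Qed.

Lemma deg_edges (G : sgraph) (u : G) :
  \sum_(e in edges G) (u \in e : nat) = deg u.
Proof.
rewrite -big_mkcondr /= sum1_card /deg.
rewrite -(card_in_imset (f := fun w => [set u; w]) (D := [set w | adj u w])); last first.
  move=> w w'; rewrite !inE => Hw Hw' E.
  have : w' \in [set u; w] by rewrite E !inE eqxx orbT.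
  rewrite !inE => /orP [] /eqP // Ew'; move: Hw'; by rewrite Ew' adj_irr.
apply: eq_card => e; rewrite /= unfold_in /=; apply/andP/imsetP.
  case=> /edgeP [a [b [Hab nab ->]]]; rewrite !inE => /orP [] /eqP ->.
    by exists b; rewrite ?inE.
  by exists a; rewrite ?inE 1?adj_sym // setUC.
case=> w; rewrite inE => Huw ->; split; last by rewrite !inE eqxx.
by apply/edgeP; exists u, w; split=> //; apply/negP=> /eqP E; move: Huw; rewrite E adj_irr.
Qed.

Lemma handshake (G : sgraph) (f : G -> nat) :
  \sum_(e in edges G) \sum_(x in e) f x = \sum_x deg x * f x.
Proof.
under eq_bigr do rewrite big_mkcond /=.
rewrite exchange_big /=; apply: eq_bigr => x _.
rewrite -deg_edges big_distrl /=; apply: eq_bigr => e _.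
by case: (x \in e); rewrite ?mul1n ?mul0n.
Qed.

Lemma sum_mem (T : finType) (A : {set T}) : \sum_(v : T) (v \in A : nat) = #|A|.
Proof. by rewrite -sum1_card [RHS]big_mkcond; apply: eq_bigr => v _; case: (v \in A). Qed.

Lemma card_inter (G : sgraph) (e f : {set G}) : e \in edges G -> f \in edges G ->
  #|e :&: f| = ((e != f) && (e :&: f != set0)) + 2 * (e == f).
Proof.
move=> He Hf; have [->|nef] := eqVneq e f; first by rewrite setIid card_edge.
rewrite /= -card_gt0 muln0 addn0.
have Hle : #|e :&: f| <= 2.
  by rewrite -(card_edge He); apply: subset_leq_card; apply: subsetIl.
have Hne : #|e :&: f| != 2.
  apply/eqP => E.
  have E1 : e :&: f = e by apply/eqP; rewrite eqEcard subsetIl E card_edge.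
  have E2 : e :&: f = f by apply/eqP; rewrite eqEcard subsetIr E card_edge.
  by move: nef; rewrite -E1 E2 eqxx.
by move: Hle Hne; case: #|_| => [|[|[|]]].
Qed.

Section Join.
Variables G1 G2 : sgraph.
Let T := edge_tjoin G1 G2.

Lemma deg_V1 (u : G1) : deg (inl (inl u) : T) = 2 * deg u.
Proof.
rewrite degE !big_sumType /=.
rewrite (@sum_sig _ (fun e => e \in edges G1) (fun e : {set G1} => (u \in e : nat))).
rewrite deg_edges -degE big1_eq.
by rewrite addn0 mul2n addnn.
Qed.

Lemma deg_V2 (w : G2) : deg (inr w : T) = deg w + #|edges G1|.
Proof.
rewrite degE !big_sumType /= -degE big1 // add0n.
by rewrite sum1_card card_sig addnC; congr (_ + _); apply: eq_card.
Qed.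

Lemma deg_I (e : edge_t G1) : deg (inl (inr e) : T) = \sum_(x in val e) deg x + #|G2|.
Proof.
rewrite degE !big_sumType /= sum1_card sum_mem card_edge ?(valP e) //.
congr (_ + _); rewrite addnC.
have H1 : forall f : edge_t G1, #|val e :&: val f| = ((e != f) && (val e :&: val f != set0)) + 2 * (e == f).
  by move=> f; rewrite card_inter ?(valP e) ?(valP f).
have H2 : forall A B : {set G1}, #|A :&: B| = \sum_(x in A) (x \in B : nat).
  move=> A B; rewrite -sum1_card (eq_bigl (fun x => (x \in A) && (x \in B))); last by move=> x; rewrite inE.
  by rewrite big_mkcondr.
have H3 : \sum_(f : edge_t G1) 2 * (e == f) = 2.
  rewrite (bigD1 e) //= eqxx big1 => [//|f nf]; by rewrite eq_sym (negbTE nf).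
rewrite -[in LHS]H3 -big_split /=.
under eq_bigr do rewrite -H1 H2.
rewrite exchange_big /=; apply: eq_bigr => x _.
by rewrite (@sum_sig _ (fun e => e \in edges G1) (fun e : {set G1} => (x \in e : nat))) deg_edges.
Qed.


End Join.

From mathcomp Require Import ring.

Theorem theorem8 (G1 G2 : sgraph) :
  connected G1 -> connected G2 ->
  let n1 := #|G1| in let n2 := #|G2| in
  let m1 := #|edges G1| in let m2 := #|edges G2| in
  Fidx (edge_tjoin G1 G2) =
    8 * Fidx G1 + Fidx G2 + 3 * n2 ^ 2 * M1 G1 + 3 * m1 * M1 G2 + M4 G1
    + 3 * n2 * HM G1 + 3 * ReZM G1 + m1 ^ 2 * (6 * m2 + m1 * n2) + m1 * n2 ^ 3.
Proof.
move=> _ _ n1 n2 m1 m2.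
rewrite /Fidx !big_sumType /=.
under eq_bigr do rewrite deg_V1.
under [X in _ + X + _ = _]eq_bigr do rewrite deg_I.
under [X in _ + _ + X = _]eq_bigr do rewrite deg_V2.
rewrite (@sum_sig _ (fun e => e \in edges G1) (fun e : {set G1} => (\sum_(x in e) deg x + #|G2|) ^ 3)).
have A : \sum_(u : G1) (2 * deg u) ^ 3 = 8 * \sum_(u : G1) deg u ^ 3.
  by rewrite big_distrr; apply: eq_bigr => u _; rewrite expnMn.
have B : \sum_(e in edges G1) (\sum_(x in e) deg x + n2) ^ 3 =
   \sum_(e in edges G1) (\sum_(x in e) deg x ^ 3) + 3 * ReZM G1 + 3 * n2 * HM G1
   + 3 * n2 ^ 2 * (\sum_(e in edges G1) \sum_(x in e) deg x) + m1 * n2 ^ 3.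
  rewrite /ReZM /HM !big_distrr -sum_nat_const /= -!big_split /=.
  apply: eq_bigr => e He; have [a [b Hab]] := sum_edge _ _ He.
  have [S1 P1] := Hab (fun x => deg x); have [S3 _] := Hab (fun x => deg x ^ 3).
  rewrite S1 P1 S3; ring.
have C : \sum_(w : G2) (deg w + m1) ^ 3 = Fidx G2 + 3 * m1 * M1 G2 + 3 * m1 ^ 2 * (\sum_(w : G2) deg w) + n2 * m1 ^ 3.
  rewrite /Fidx /M1 !big_distrr -[n2 * _]sum_nat_const /= -!big_split /=.
  apply: eq_bigr => w _; ring.
have D : \sum_(w : G2) deg w = 2 * m2.
  have H := handshake G2 (fun _ => 1).
  rewrite (eq_bigr (fun _ => 2)) in H; last by move=> e He; rewrite sum1_card card_edge.
  rewrite sum_nat_const in H.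
  by rewrite /m2 mulnC H; apply: eq_bigr => x _; rewrite muln1.
have E1 : \sum_(e in edges G1) \sum_(x in e) deg x = M1 G1.
  by rewrite handshake; apply: eq_bigr => x _; rewrite expnS expn1.
have E3 : \sum_(e in edges G1) \sum_(x in e) deg x ^ 3 = M4 G1.
  by rewrite handshake; apply: eq_bigr => x _; rewrite -expnS.
rewrite A B C D E1 E3 /Fidx /n2 /m1 /m2; ring.
Qed.
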